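(* Let $n=2^k$ for an integer $k\ge1$ and $\omega_n=e^{2\pi i/n}$. Define $$A_{n}=\{\Re(\omega_n^t):t\in\mathbb{Z},\ 0\le t<2^{k-2}\},\qquad B_{n}=\{i\,\Im(\omega_n^t):t\in\mathbb{Z},\ 0<t\le 2^{k-2}\}.$$ Then $A_n\cup B_n$ is a basis for $\mathbb{Q}(\omega_n)$ over $\mathbb{Q}$. Moreover, for every integer $t$, all coordinates of $\Re(\omega_n^t)$ and of $i\,\Im(\omega_n^t)$ with respect to this basis lie in $\{-1,0,1\}$.
   Context: $\Re$ and $\Im$ denote real and imaginary parts. *)

(* Defs.v *)
From mathcomp Require Import all_boot all_order all_algebra.
From mathcomp Require Import reals trigo.
From mathcomp.real_closed Require Import complex.
Import Order.TTheory GRing.Theory Num.Theory.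

Set Implicit Arguments.
Unset Strict Implicit.
Unset Printing Implicit Defensive.

Local Open Scope ring_scope.
Local Open Scope complex_scope.

Definition omega (R : realType) (n : nat) : R[i] :=
  (cos (2 * pi / n%:R)) +i* (sin (2 * pi / n%:R)).

(* Index sets: A uses 0 <= t < 2^(k-2), i.e. 4t < 2^k;
               B uses 0 < t <= 2^(k-2), i.e. 4t <= 2^k (t > 0). *)
Definition Aidx (k : nat) : seq nat := [seq t <- iota 0 (2 ^ k) | 4 * t < 2 ^ k]%N.
Definition Bidx (k : nat) : seq nat := [seq t <- iota 1 (2 ^ k) | 4 * t <= 2 ^ k]%N.

Definition basis_seq (R : realType) (k : nat) : seq R[i] :=
  [seq 'Re (omega R (2 ^ k) ^+ t) | t <- Aidx k] ++
  [seq 'i * 'Im (omega R (2 ^ k) ^+ t) | t <- Bidx k].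

(* Subfields of a field, and the subfield Q(a) generated by a (the
   intersection of all subfields containing a; every subfield contains Q). *)
Definition is_subfield (F : fieldType) (S : F -> Prop) : Prop :=
  [/\ S 0, S 1,
      (forall x y, S x -> S y -> S (x - y)),
      (forall x y, S x -> S y -> S (x * y)) &
      (forall x, S x -> x != 0 -> S x^-1)].

Definition Qadjoin (F : fieldType) (a : F) : F -> Prop :=
  fun z => forall S : F -> Prop, is_subfield S -> S a -> S z.

Definition Qcomb (F : fieldType) (s : seq F) (c : 'I_(size s) -> rat) : F :=
  \sum_(j < size s) ratr (c j) * s`_j.

Definition is_Qbasis (F : fieldType) (K : F -> Prop) (s : seq F) : Prop :=
  [/\ (forall j : 'I_(size s), K s`_j),
      (forall c : 'I_(size s) -> rat, Qcomb c = 0 -> forall j, c j = 0) &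
      (forall z, K z -> exists c : 'I_(size s) -> rat, z = Qcomb c)].

(* Main.v *)
Require Import Defs.
From mathcomp Require Import all_boot all_order all_algebra all_field.
From mathcomp Require Import ring zify.
From mathcomp Require Import reals trigo.
From mathcomp.real_closed Require Import complex.
Import Order.TTheory GRing.Theory Num.Theory.
Local Open Scope ring_scope.

Lemma algC_m1_neq1 : (-1 : algC) != 1.
Proof.
apply/eqP => h.
have : (2%:R : algC) == 0 by rewrite -natr1 -{1}h addNr.
by rewrite pnatr_eq0.
Qed.

Lemma prim2 (j : nat) (z : algC) : z ^+ (2 ^ j) = -1 -> (2 ^ j.+1).-primitive_root z.
Proof.
move=> hz.
have ez : z ^+ (2 ^ j.+1) = 1 by rewrite expnS mulnC exprM hz expr2 mulN1r opprK.
have [d pd dd] := prim_order_exists (expn_gt0 2 j.+1) ez.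
have [i hi hd] := dvdn_pfactor d j.+1 (isT : prime 2) dd; subst d.
move: hi; rewrite leq_eqVlt => /orP[/eqP hij|hi]; first by rewrite -hij.
exfalso; move: (prim_expr_order pd) => h1.
have : (2 ^ i %| 2 ^ j)%N by apply: dvdn_exp2l.
case/dvdnP=> q hq.
move: hz; rewrite hq mulnC exprM h1 expr1n => /esym/eqP; apply/negP; exact: algC_m1_neq1.
Qed.


Lemma Kdiv (F : numFieldType) (j : nat) (w : F) : w ^+ (2 ^ j) = -1 ->
  forall p : {poly rat}, root (map_poly ratr p) w -> ('X^(2 ^ j) + 1) %| p.
Proof.
move=> hw p hp.
set Phi : {poly rat} := 'X^(2 ^ j) + 1.
have monPhi : Phi \is monic by rewrite /Phi -polyC1 monicXnaddC // expn_gt0.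
have Phi0 : Phi != 0 by apply: monic_neq0.
have Phiw : root (map_poly (ratr : rat -> F) Phi) w.
  by rewrite /root /Phi rmorphD /= map_polyXn rmorph1 hornerD hornerXn hornerC hw addNr.
have [[u v] /= Huv] := Bezoutp p Phi.
set g := gcdp p Phi in Huv.
have gw : root (map_poly (ratr : rat -> F) g) w.
  rewrite -(eqp_map (ratr : {rmorphism rat -> F})) in Huv.
  rewrite -(eqp_root Huv) /root rmorphD !rmorphM /= hornerD !hornerM.
  by move: hp Phiw; rewrite /root => /eqP -> /eqP ->; rewrite !mulr0 addr0.
have g0 : g != 0 by rewrite gcdp_eq0 negb_and Phi0 orbT.
have szg : (1 < size g)%N.
  by rewrite -(size_map_poly (ratr : {rmorphism rat -> F})); apply: root_size_gt1 gw; rewrite map_poly_eq0.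
have [z hz] : exists z : algC, root (map_poly ratr g) z.
  by apply/closed_rootP; rewrite size_map_poly neq_ltn szg orbT.
have gPhi : g %| Phi by apply: dvdp_gcdr.
have zPhi : root (map_poly (ratr : rat -> algC) Phi) z.
  by apply: root_dvdp hz; rewrite dvdp_map.
have zm : z ^+ (2 ^ j) = -1.
  move: zPhi; rewrite /root /Phi rmorphD /= map_polyXn rmorph1 hornerD hornerXn hornerC.
  by rewrite addr_eq0 => /eqP.
have pz := prim2 _ _ zm.
have [p0 [Dp0 _] dv] := minCpolyP z.
have szp0 : size p0 = size Phi.
  rewrite -(size_map_poly (ratr : {rmorphism rat -> algC})) -Dp0.
  rewrite (minCpoly_cyclotomic pz) size_cyclotomic totient_pfactor //.
  rewrite /Phi size_addl ?size_polyXn //.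
  - by rewrite mul1n.
  - by rewrite size_polyC oner_eq0 ltnS expn_gt0.
have p0g : p0 %| g by rewrite -dv.
have : (size Phi <= size g)%N by rewrite -szp0 dvdp_leq.
have : (size g <= size Phi)%N by rewrite dvdp_leq.
move=> h1 h2.
have /eqP hs : size g == size Phi by rewrite eqn_leq h1 h2.
have : g %= Phi by rewrite -dvdp_size_eqp // hs.
move=> eqgP.
by rewrite -(eqp_dvdl _ eqgP) dvdp_gcdl.
Qed.

Section Comb.
Variables (F : numFieldType) (s : seq F).

Lemma Qcomb0 : Qcomb (fun _ : 'I_(size s) => 0) = 0.
Proof. by rewrite /Qcomb big1 // => i _; rewrite rmorph0 mul0r. Qed.

Lemma QcombD c1 c2 : Qcomb (s:=s) c1 + Qcomb c2 = Qcomb (fun i => c1 i + c2 i).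
Proof. by rewrite /Qcomb -big_split; apply: eq_bigr => i _; rewrite rmorphD mulrDl. Qed.

Lemma QcombZ (q : rat) c : ratr q * Qcomb (s:=s) c = Qcomb (fun i => q * c i).
Proof. by rewrite /Qcomb mulr_sumr; apply: eq_bigr => i _; rewrite rmorphM mulrA. Qed.

Lemma Qcomb_single (x : F) (e : rat) : x \in s ->
  exists c : 'I_(size s) -> rat, (forall i, c i = e \/ c i = 0) /\ Qcomb c = ratr e * x.
Proof.
move=> xs; pose i0 : 'I_(size s) := Ordinal (etrans (index_mem x s) xs).
exists (fun i => if i == i0 then e else 0); split.
  by move=> i; case: (i == i0); tauto.
rewrite /Qcomb (bigD1 i0) //= eqxx big1 ?addr0; last first.
  by move=> i /negbTE ->; rewrite rmorph0 mul0r.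
by rewrite /= nth_index.
Qed.

Definition Rep (z : F) : Prop := exists c : 'I_(size s) -> rat, z = Qcomb c.

Lemma Rep0 : Rep 0.
Proof. by exists (fun _ => 0); rewrite Qcomb0. Qed.

Lemma RepD x y : Rep x -> Rep y -> Rep (x + y).
Proof. by move=> [c1 ->] [c2 ->]; exists (fun i => c1 i + c2 i); rewrite QcombD. Qed.

Lemma RepZ q x : Rep x -> Rep (ratr q * x).
Proof. by move=> [c1 ->]; exists (fun i => q * c1 i); rewrite QcombZ. Qed.

Lemma Rep_sum (I : finType) (P : I -> F) : (forall i, Rep (P i)) -> Rep (\sum_i P i).
Proof.
move=> h; apply: (big_ind Rep); [exact: Rep0 | exact: RepD | move=> i _; exact: h].
Qed.

End Comb.

Section SF.
Variables (F : numFieldType) (T : F -> Prop).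
Hypothesis hT : is_subfield T.

Lemma sf0 : T 0. Proof. by case: hT. Qed.
Lemma sf1 : T 1. Proof. by case: hT. Qed.
Lemma sfB x y : T x -> T y -> T (x - y). Proof. by case: hT => _ _ h _ _; apply: h. Qed.
Lemma sfM x y : T x -> T y -> T (x * y). Proof. by case: hT => _ _ _ h _; apply: h. Qed.
Lemma sfV x : T x -> x != 0 -> T x^-1. Proof. by case: hT => _ _ _ _ h; apply: h. Qed.
Lemma sfN x : T x -> T (- x). Proof. by move=> h; rewrite -sub0r; apply: sfB => //; exact: sf0. Qed.
Lemma sfD x y : T x -> T y -> T (x + y).
Proof. by move=> h1 h2; rewrite -[y]opprK; apply: sfB => //; exact: sfN. Qed.
Lemma sfX x n : T x -> T (x ^+ n).
Proof. by move=> h; elim: n => [|n ih]; [rewrite expr0; exact: sf1 | rewrite exprS; exact: sfM]. Qed.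
Lemma sfXz x (t : int) : T x -> x != 0 -> T (x ^ t).
Proof.
move=> h x0; case: t => n; first exact: sfX.
by apply: sfV; [exact: sfX | rewrite expf_neq0].
Qed.
Lemma sf_half x : T x -> T (x / 2).
Proof.
move=> h; apply: sfM => //; apply: sfV; last by rewrite pnatr_eq0.
by rewrite -[2]/(1 + 1 : F); apply: sfD; exact: sf1.
Qed.

End SF.

Lemma count_iota_lt (a n b : nat) (P : pred nat) : (a <= n)%N ->
  {in iota b n, forall t, P t = (t < b + a)%N} -> count P (iota b n) = a.
Proof.
move=> han hP; rewrite (eq_in_count hP) -(subnKC han) iotaD count_cat.
rewrite (@eq_in_count _ _ predT (iota b a)); last first.
  by move=> t; rewrite mem_iota => /andP[_ ->].
rewrite (@eq_in_count _ _ pred0 (iota (b + a) (n - a))); last first.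
  by move=> t; rewrite mem_iota => /andP[h _] /=; rewrite ltnNge h.
by rewrite count_predT count_pred0 size_iota addn0.
Qed.

Lemma size_AB (j : nat) : (size (Aidx j.+1) + size (Bidx j.+1))%N = (2 ^ j)%N.
Proof.
case: j => [//|j].
rewrite /Aidx /Bidx !size_filter !expnS mulnA.
set q := (2 ^ j)%N.
rewrite (@count_iota_lt q) ?(@count_iota_lt q).
all: try (move=> t _ /=); lia.
Qed.

Section Gen.
Variables (C : numClosedFieldType) (j : nat) (w : C).
Hypothesis hw : w ^+ (2 ^ j) = -1.
Hypothesis hc : w^* = w^-1.

Lemma w_neq0 : w != 0.
Proof.
apply/eqP=> w0; move: hw; rewrite w0 expr0n expn_eq0 /= => /eqP.
by rewrite eq_sym oppr_eq0 oner_eq0.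
Qed.

Lemma w_unit : w \is a GRing.unit.
Proof. by rewrite unitfE w_neq0. Qed.

Lemma wzm (t : int) : w ^ (t + (2 ^ j)%N%:Z) = - w ^ t.
Proof. by rewrite exprzDr ?w_unit // -exprnP hw mulrN1. Qed.

Lemma wzmN (t : int) : w ^ (t - (2 ^ j)%N%:Z) = - w ^ t.
Proof. by rewrite -{2}(subrK (2 ^ j)%N%:Z t) wzm opprK. Qed.

Definition fw (t : int) : C := (w ^ t + w ^ (- t)) / 2.
Definition gw (t : int) : C := (w ^ t - w ^ (- t)) / 2.

Lemma fwm t : fw (t + (2 ^ j)%N%:Z) = - fw t.
Proof. by rewrite /fw opprD wzm wzmN -mulNr opprD. Qed.

Lemma gwm t : gw (t + (2 ^ j)%N%:Z) = - gw t.
Proof. by rewrite /gw opprD wzm wzmN -mulNr opprD opprK. Qed.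

Lemma fwN t : fw (- t) = fw t.
Proof. by rewrite /fw opprK addrC. Qed.

Lemma gwN t : gw (- t) = - gw t.
Proof. by rewrite /gw opprK -mulNr opprB. Qed.

Lemma fwgw t : fw t + gw t = w ^ t.
Proof. by rewrite /fw /gw; field. Qed.

Lemma Re_w t : 'Re (w ^ t) = fw t.
Proof.
rewrite ReE /fw; congr ((_ + _) / _).
by rewrite (rmorphXz (Num.conj_op : {rmorphism C -> C})) ?w_unit //= hc exprz_inv.
Qed.

Lemma Im_w t : 'i * 'Im (w ^ t) = gw t.
Proof.
have h := Crect (w ^ t); rewrite Re_w in h.
have -> : 'i * 'Im (w ^ t) = w ^ t - fw t by rewrite {2}h addrC addKr.
by rewrite -{1}(fwgw t) addrC addKr.
Qed.


Definition sq := [seq 'Re (w ^+ t) | t <- Aidx j.+1] ++ [seq 'i * 'Im (w ^+ t) | t <- Bidx j.+1].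

Lemma fw_in (t : nat) : (2 * t < 2 ^ j)%N -> fw t \in sq.
Proof.
move=> ht; rewrite -Re_w mem_cat; apply/orP; left.
apply: (map_f (fun t : nat => 'Re (w ^+ t))).
rewrite mem_filter mem_iota expnS; move: ht; set m := (2 ^ j)%N => ht.
lia.
Qed.

Lemma gw_in (t : nat) : (0 < t)%N -> (2 * t <= 2 ^ j)%N -> gw t \in sq.
Proof.
move=> h0 ht; rewrite -Im_w mem_cat; apply/orP; right.
apply: (map_f (fun t : nat => 'i * 'Im (w ^+ t))).
rewrite mem_filter mem_iota expnS; move: ht; set m := (2 ^ j)%N => ht.
lia.
Qed.


Definition Sg (z : C) := z = 0 \/ z \in sq \/ - z \in sq.

Lemma SgN z : Sg z -> Sg (- z).
Proof. by case=> [->|[h|h]]; rewrite /Sg ?oppr0 ?opprK; tauto. Qed.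

Lemma fw_nat (r : nat) : (r < 2 ^ j)%N -> Sg (fw r).
Proof.
move=> hr; set m := (2 ^ j)%N in hr *.
case: (ltngtP (2 * r) m) => h.
- by right; left; apply: fw_in.
- right; right.
  have -> : fw r = - fw (m - r)%N.
    have -> : (r%:Z) = ((r%:Z - m%:Z) + m%:Z) by rewrite subrK.
    rewrite fwm -fwN opprB subzn //; exact: ltnW.
  rewrite opprK; apply: fw_in; rewrite -/m; lia.
- left; rewrite /fw.
  have -> : w ^ (- r%:Z) = - w ^ r%:Z.
    have -> : (- r%:Z) = (r%:Z - m%:Z) by rewrite -h; lia.
    by rewrite wzmN.
  by rewrite subrr mul0r.
Qed.

Lemma gw_nat (r : nat) : (r < 2 ^ j)%N -> Sg (gw r).
Proof.
move=> hr; set m := (2 ^ j)%N in hr *.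
case: (posnP r) => [->|r0].
  by left; rewrite /gw oppr0 subrr mul0r.
case: (leqP (2 * r) m) => h.
- by right; left; apply: gw_in.
- right; left.
  have -> : gw r = gw (m - r)%N.
    have -> : (r%:Z) = ((r%:Z - m%:Z) + m%:Z) by rewrite subrK.
    rewrite gwm -(opprB m%:Z) gwN opprK subzn //; exact: ltnW.
  apply: gw_in; rewrite -/m; lia.
Qed.


Lemma wper (t q : int) : w ^ (t + q * (2 * 2 ^ j)%N%:Z) = w ^ t.
Proof.
rewrite exprzDr ?w_unit // [q * _]mulrC -exprz_exp -exprnP mulnC exprM hw.
by rewrite expr2 mulN1r opprK exp1rz mulr1.
Qed.

Lemma fwper (t q : int) : fw (t + q * (2 * 2 ^ j)%N%:Z) = fw t.
Proof. by rewrite /fw wper opprD -mulNr wper. Qed.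

Lemma gwper (t q : int) : gw (t + q * (2 * 2 ^ j)%N%:Z) = gw t.
Proof. by rewrite /gw wper opprD -mulNr wper. Qed.

Lemma reduce_int (t : int) : exists q : int, exists r : nat,
  t = r%:Z + q * (2 * 2 ^ j)%N%:Z /\ (r < 2 * 2 ^ j)%N.
Proof.
set n := (2 * 2 ^ j)%N.
have n0 : (0 < n)%N by rewrite muln_gt0 expn_gt0.
exists (t %/ n%:Z)%Z, `|(t %% n%:Z)%Z|%N.
have hge : 0 <= (t %% n%:Z)%Z by rewrite modz_ge0 // eqz_nat -lt0n.
have hlt : (t %% n%:Z)%Z < n%:Z by rewrite ltz_pmod // ltz_nat.
split; first by rewrite gez0_abs // addrC -divz_eq.
by rewrite -ltz_nat gez0_abs.
Qed.

Lemma fw_Sg (t : int) : Sg (fw t).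
Proof.
have [q [r [-> hr]]] := reduce_int t; rewrite fwper.
case: (ltnP r (2 ^ j)) => h; first exact: fw_nat.
have -> : (r%:Z) = (r - 2 ^ j)%N%:Z + (2 ^ j)%N%:Z by rewrite -subzn // subrK.
rewrite fwm; apply: SgN; apply: fw_nat; move: hr h; set m := (2 ^ j)%N; lia.
Qed.

Lemma gw_Sg (t : int) : Sg (gw t).
Proof.
have [q [r [-> hr]]] := reduce_int t; rewrite gwper.
case: (ltnP r (2 ^ j)) => h; first exact: gw_nat.
have -> : (r%:Z) = (r - 2 ^ j)%N%:Z + (2 ^ j)%N%:Z by rewrite -subzn // subrK.
rewrite gwm; apply: SgN; apply: gw_nat; move: hr h; set m := (2 ^ j)%N; lia.
Qed.


Lemma Sg_comb z : Sg z -> exists c : 'I_(size sq) -> rat,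
  (forall i, c i \in [:: -1; 0; 1]) /\ z = Qcomb c.
Proof.
case=> [->|[h|h]].
- exists (fun _ => 0); split; last by rewrite Qcomb0.
  by move=> i; rewrite !inE eqxx orbT.
- have [c [hc1 hc2]] := @Qcomb_single _ _ z 1 h; exists c; split.
    by move=> i; case: (hc1 i) => ->; rewrite !inE eqxx ?orbT.
  by rewrite hc2 rmorph1 mul1r.
- have [c [hc1 hc2]] := @Qcomb_single _ _ (- z) (-1) h; exists c; split.
    by move=> i; case: (hc1 i) => ->; rewrite !inE eqxx ?orbT.
  by rewrite hc2 rmorphN1 mulN1r opprK.
Qed.

Lemma Rep_Sg z : Sg z -> @Rep C sq z.
Proof. by move=> /Sg_comb [c [_ ->]]; exists c. Qed.

Lemma Rep_pow (t : int) : @Rep C sq (w ^ t).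
Proof. rewrite -fwgw; apply: RepD; apply: Rep_Sg; [exact: fw_Sg | exact: gw_Sg]. Qed.


Definition Phi : {poly rat} := 'X^(2 ^ j) + 1.

Lemma Phi_neq0 : Phi != 0.
Proof. by apply: monic_neq0; rewrite /Phi -polyC1 monicXnaddC // expn_gt0. Qed.

Lemma Phi_root : root (map_poly (ratr : rat -> C) Phi) w.
Proof.
by rewrite /root /Phi rmorphD /= map_polyXn rmorph1 hornerD hornerXn hornerC hw addNr.
Qed.

Lemma Phi_size : size Phi = (2 ^ j).+1.
Proof. by rewrite /Phi size_addl ?size_polyXn // size_polyC oner_eq0 ltnS expn_gt0. Qed.

Lemma Phi_irr : irreducible_poly Phi.
Proof.
split; first by rewrite Phi_size ltnS expn_gt0.
move=> q q1 /dvdpP [h hPhi].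
have q0 : q != 0 by apply: contraNneq Phi_neq0 => q0; rewrite hPhi q0 mulr0.
have h0 : h != 0 by apply: contraNneq Phi_neq0 => h0; rewrite hPhi h0 mul0r.
have hr := Phi_root; rewrite hPhi /root rmorphM hornerM mulf_eq0 in hr; case/orP: hr => [hw0|qw0].
  have hs : size (h * q) = (2 ^ j).+1 by rewrite -hPhi Phi_size.
  have := @Kdiv C j w hw h hw0; rewrite -/Phi => /(dvdp_leq h0); rewrite Phi_size.
  move: hs; rewrite size_mul //.
  move: q1 q0; rewrite -size_poly_eq0; case: (size q) => [//|[//|n]] _ _.
  move=> hs hle; exfalso; lia.
rewrite /eqp; apply/andP; split; first by rewrite hPhi dvdp_mull.
exact: (@Kdiv C j w hw q qw0).
Qed.

Definition Sset (z : C) : Prop := exists p : {poly rat}, z = (map_poly ratr p).[w].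

Lemma Sset_subfield : is_subfield Sset.
Proof.
split.
- by exists 0; rewrite rmorph0 horner0.
- by exists 1; rewrite rmorph1 hornerC.
- by move=> x y [p ->] [q ->]; exists (p - q); rewrite rmorphB hornerD hornerN.
- by move=> x y [p ->] [q ->]; exists (p * q); rewrite rmorphM hornerM.
- move=> x [p ->] x0.
  have nd : ~~ (Phi %| p).
    apply: contra x0 => hd.
    rewrite -[_ == 0]/(root _ w); apply: (root_dvdp _ Phi_root).
    by rewrite dvdp_map.
  have := nd; rewrite -irreducible_poly_coprime ?Phi_irr //.
  move=> /Bezout_eq1_coprimepP [[u v] /= huv].
  exists v.
  have : (map_poly (ratr : rat -> C) (u * Phi + v * p)).[w] = 1 by rewrite huv rmorph1 hornerC.
  rewrite rmorphD !rmorphM /= hornerD !hornerM.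
  move: Phi_root; rewrite /root => /eqP ->; rewrite mulr0 add0r => h1.
  by rewrite -[LHS]mul1r -h1 mulfK.
exact: Phi_irr.
Qed.


Lemma sf_fw (T : C -> Prop) t : is_subfield T -> T w -> T (fw t).
Proof.
move=> hT hTw; apply: sf_half => //.
by apply: sfD => //; apply: sfXz => //; exact: w_neq0.
Qed.

Lemma sf_gw (T : C -> Prop) t : is_subfield T -> T w -> T (gw t).
Proof.
move=> hT hTw; apply: sf_half => //.
by apply: sfB => //; apply: sfXz => //; exact: w_neq0.
Qed.

Lemma sq_elem x : x \in sq -> exists t : int, x = fw t \/ x = gw t.
Proof.
rewrite mem_cat => /orP[/mapP [t _ ->]|/mapP [t _ ->]]; exists t%:Z.
  by left; rewrite -Re_w.
by right; rewrite -Im_w.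
Qed.

Lemma Qadj_S z : Qadjoin w z -> Sset z.
Proof.
move=> h; apply: h; first exact: Sset_subfield.
by exists 'X; rewrite map_polyX hornerX.
Qed.

Lemma S_Rep z : Sset z -> @Rep C sq z.
Proof.
move=> [p ->]; rewrite horner_coef; apply: Rep_sum => i.
rewrite coef_map /=; apply: RepZ; exact: (Rep_pow i).
Qed.


Definition phi (v : 'rV[rat]_(2 ^ j)) : C := \sum_(i < 2 ^ j) ratr (v 0 i) * w ^+ i.

Lemma phiB a b : phi (a - b) = phi a - phi b.
Proof.
rewrite /phi -sumrB; apply: eq_bigr => i _.
by rewrite !mxE rmorphB mulrBl.
Qed.

Lemma phi_poly (v : 'rV[rat]_(2 ^ j)) :
  phi v = (map_poly ratr (rVpoly v)).[w].
Proof.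
rewrite (@horner_coef_wide _ (2 ^ j)); last first.
  by rewrite size_map_poly size_poly.
by apply: eq_bigr => i _; rewrite coef_map coef_rVpoly_ord.
Qed.

Lemma phi_inj0 v : phi v = 0 -> v = 0.
Proof.
move=> h0; set p := rVpoly v.
have hr : root (map_poly (ratr : rat -> C) p) w by rewrite /root -phi_poly h0.
have hd := @Kdiv C j w hw p hr.
have p0 : p = 0.
  apply/eqP; apply: contraT => pn0.
  have := dvdp_leq pn0 hd; rewrite -/Phi Phi_size.
  have : (size p <= 2 ^ j)%N by rewrite size_poly.
  by move=> h1 h2; move: (leq_ltn_trans h1 h2); rewrite ltnn.
apply/rowP => i; rewrite mxE.
have : p`_i = v 0 i by rewrite coef_rVpoly_ord.
by rewrite p0 coef0 => <-.
Qed.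

Lemma phi_inj a b : phi a = phi b -> a = b.
Proof.
by move=> h; apply/eqP; rewrite -subr_eq0; apply/eqP/phi_inj0; rewrite phiB h subrr.
Qed.

Lemma phi_mul (M : nat) (v : 'rV_M) (U : 'M_(M, 2 ^ j)) :
  phi (v *m U) = \sum_(k < M) ratr (v 0 k) * phi (row k U).
Proof.
rewrite /phi.
under eq_bigr do rewrite mxE rmorph_sum mulr_suml.
rewrite exchange_big; apply: eq_bigr => k _; rewrite mulr_sumr.
by apply: eq_bigr => i _; rewrite !mxE rmorphM mulrA.
Qed.

Lemma S_phi z : Sset z -> exists v, z = phi v.
Proof.
move=> [p ->]; exists (\row_i (p %% Phi)`_i).
have -> : (map_poly (ratr : rat -> C) p).[w] = (map_poly ratr (p %% Phi)).[w].
  rewrite {1}(divp_eq p Phi) rmorphD rmorphM hornerD hornerM.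
  by move: Phi_root; rewrite /root => /eqP ->; rewrite mulr0 add0r.
rewrite (@horner_coef_wide _ (2 ^ j)); last first.
  rewrite size_map_poly -ltnS -Phi_size ltn_modp; exact: Phi_neq0.
by apply: eq_bigr => i _; rewrite coef_map mxE.
Qed.


Lemma size_sq : size sq = (2 ^ j)%N.
Proof. by rewrite /sq size_cat !size_map size_AB. Qed.

Lemma sq_S (k : 'I_(size sq)) : Sset sq`_k.
Proof.
have /sq_elem [t [->| ->]] := mem_nth 0 (ltn_ord k).
  by apply: sf_fw; [exact: Sset_subfield | exists 'X; rewrite map_polyX hornerX].
by apply: sf_gw; [exact: Sset_subfield | exists 'X; rewrite map_polyX hornerX].
Qed.

Lemma sq_indep (c : 'I_(size sq) -> rat) : Qcomb c = 0 -> forall i, c i = 0.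
Proof.
move=> hc0.
have [uf huf] : exists uf : 'I_(size sq) -> 'rV[rat]_(2 ^ j), forall k : 'I_(size sq), sq`_k = phi (uf k).
  have [uf huf] := @fin_all_exists _ (fun _ => 'rV[rat]_(2 ^ j)) (fun (k : 'I_(size sq)) v => sq`_k = phi v)
    (fun k => S_phi _ (sq_S k)).
  by exists uf.
have [Nf hNf] : exists Nf : 'I_(2 ^ j) -> ('I_(size sq) -> rat),
    forall i : 'I_(2 ^ j), w ^+ i = Qcomb (Nf i).
  have [Nf hNf] := @fin_all_exists _ (fun _ => 'I_(size sq) -> rat)
    (fun (i : 'I_(2 ^ j)) c => w ^+ i = Qcomb c) (fun i => Rep_pow i).
  by exists Nf.
pose U : 'M[rat]_(size sq, 2 ^ j) := \matrix_(k < size sq, i < 2 ^ j) uf k 0 i.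
pose N : 'M[rat]_(2 ^ j, size sq) := \matrix_(i < 2 ^ j, k < size sq) Nf i k.
have rowU k : row k U = uf k by apply/rowP => i; rewrite !mxE.
have phiU (v : 'rV_(size sq)) : phi (v *m U) = Qcomb (fun k => v 0 k).
  by rewrite phi_mul /Qcomb; apply: eq_bigr => k _; rewrite rowU huf.
have NU : N *m U = 1%:M.
  apply/row_matrixP => i; apply: phi_inj.
  rewrite row_mul phiU.
  have -> : Qcomb (fun k => row i N 0 k) = Qcomb (Nf i).
    by apply: eq_bigr => k _; rewrite !mxE.
  rewrite -hNf /phi (bigD1 i) //= big1 ?addr0; last first.
    by move=> i' /negbTE hi; rewrite !mxE eq_sym hi rmorph0 mul0r.
  by rewrite !mxE eqxx rmorph1 mul1r.
have rf : row_free U.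
  rewrite /row_free eqn_leq rank_leq_row /=.
  rewrite [X in (X <= _)%N]size_sq; by have := mxrankM_maxr N U; rewrite NU mxrank1.
pose cv : 'rV[rat]_(size sq) := \row_k c k.
have : cv *m U = 0 *m U.
  apply: phi_inj; rewrite phiU mul0mx.
  have -> : Qcomb (fun k => cv 0 k) = Qcomb c by apply: eq_bigr => k _; rewrite mxE.
  by rewrite hc0 /phi big1 // => i _; rewrite mxE rmorph0 mul0r.
move/(row_free_inj rf) => cv0 i.
by have := congr1 (fun M : 'rV[rat]_(size sq) => M 0 i) cv0; rewrite !mxE.
Qed.


Lemma gen_main : is_Qbasis (Qadjoin w) sq /\
  (forall t : int,
     (exists c : 'I_(size sq) -> rat,
        (forall j, c j \in [:: -1; 0; 1]) /\ 'Re (w ^ t) = Qcomb c) /\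
     (exists c : 'I_(size sq) -> rat,
        (forall j, c j \in [:: -1; 0; 1]) /\ 'i * 'Im (w ^ t) = Qcomb c)).
Proof.
split.
  split.
  - move=> k T hT hTw.
    have /sq_elem [t [->| ->]] := mem_nth 0 (ltn_ord k).
      exact: sf_fw.
    exact: sf_gw.
  - exact: sq_indep.
  - by move=> z /Qadj_S /S_Rep.
move=> t; split.
  by rewrite Re_w; apply: Sg_comb; exact: fw_Sg.
by rewrite Im_w; apply: Sg_comb; exact: gw_Sg.
Qed.

End Gen.

Local Open Scope complex_scope.

Lemma cpow (R : realType) (a : R) (n : nat) :
  (cos a +i* sin a) ^+ n = cos (n%:R * a) +i* sin (n%:R * a).
Proof.
elim: n => [|n ih]; first by rewrite expr0 mul0r cos0 sin0.
rewrite exprS ih.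
have -> : n.+1%:R * a = a + n%:R * a by rewrite -natr1 mulrDl mul1r addrC.
by rewrite cosD sinD /= [sin a * _ + _]addrC.
Qed.

Lemma omega_hw (R : realType) (j : nat) : omega R (2 ^ j.+1) ^+ (2 ^ j) = -1.
Proof.
rewrite /omega cpow.
have -> : (2 ^ j)%N%:R * (2 * pi / (2 ^ j.+1)%N%:R) = pi :> R.
  by rewrite expnS natrM; field; rewrite pnatr_eq0 expn_eq0.
by rewrite cospi sinpi; apply/eqP; rewrite eq_complex /= oppr0 !eqxx.
Qed.

Lemma omega_hc (R : realType) (n : nat) : (omega R n)^* = (omega R n)^-1.
Proof.
set w := omega R n.
have h : w * w^* = 1.
  by rewrite -normCK normc_def /= cos2Dsin2 sqrtr1 expr1n.
have w0 : w != 0 by apply: contra_eq_neq h => ->; rewrite mul0r eq_sym oner_eq0.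
by rewrite -[RHS]mulr1 -h mulKf.
Qed.

Theorem lemma8 (R : realType) (k : nat) : (1 <= k)%N ->
  let w := omega R (2 ^ k) in
  let s := basis_seq R k in
  is_Qbasis (Qadjoin w) s /\
  (forall t : int,
     (exists c : 'I_(size s) -> rat,
        (forall j, c j \in [:: -1; 0; 1]) /\ 'Re (w ^ t) = Qcomb c) /\
     (exists c : 'I_(size s) -> rat,
        (forall j, c j \in [:: -1; 0; 1]) /\ 'i * 'Im (w ^ t) = Qcomb c)).
Proof.
case: k => [//|j] _ /=.
exact: (@gen_main _ j _ (omega_hw R j) (omega_hc R _)).
Qed.
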